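(* Let $X$ be a well-filtered space whose Smyth power space $P_S(X)$ is first-countable. The following are equivalent: (1) $X$ is locally compact. (2) $\mathsf{K}(X)$ is a continuous semilattice, and $\xi_X^\sigma:X\to\Sigma\,\mathsf{K}(X)$, $x\mapsto\uparrow x$, is continuous. (3) $\mathsf{K}(X)$ is a continuous semilattice, and $X$ has property Q. (4) $\mathsf{K}(X)$ is a continuous semilattice. (5) $X$ is core compact.
   Context: Spaces are $T_0$; specialization order $x\le y$ iff $x\in\overline{\{y\}}$; saturated = upper set. $\mathsf{K}(X)$ = nonempty compact saturated subsets ordered by reverse inclusion (a family has a supremum iff its intersection lies in $\mathsf{K}(X)$, and then it is the intersection). Scott topology on a poset: upper sets $U$ such that every directed $D$ with existing supremum in $U$ meets $U$; $\Sigma Q$ is $Q$ with it. $a\ll b$ means for every directed $D$ with existing $\bigvee D\ge b$ some $d\in D$ has $d\ge a$; $\mathsf{K}(X)$ is a continuous semilattice if it is directed complete and each $K$ is the directed supremum of $\{L:L\ll K\}$. $P_S(X)$: $\mathsf{K}(X)$ with base $\Box U=\{K:K\subseteq U\}$, $U$ open (upper Vietoris topology). Well-filtered: for open $U$ and $\mathcal K\subseteq\mathsf{K}(X)$ filtered under inclusion, $\bigcap\mathcal K\subseteq U$ implies some $K\in\mathcal K$ lies in $U$. Property Q: $K_1\ll K_2$ iff $K_2\subseteq\operatorname{int}K_1$. Locally compact: neighborhood bases of compact sets. Core compact: open-set lattice is continuous. *)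

(* Defs.v *)
From Stdlib Require Import List.

Section Top.
Context {X : Type} (O : (X -> Prop) -> Prop).

Definition subset (A B : X -> Prop) : Prop := forall x, A x -> B x.

Definition is_topology : Prop :=
  O (fun _ => True) /\
  (forall U V, O U -> O V -> O (fun x => U x /\ V x)) /\
  (forall F : (X -> Prop) -> Prop, (forall U, F U -> O U) ->
      O (fun x => exists U, F U /\ U x)) /\
  (forall U V, O U -> (forall x, U x <-> V x) -> O V).

Definition T0 : Prop :=
  forall x y, (forall U, O U -> (U x <-> U y)) -> x = y.

Definition spec_le (x y : X) : Prop := forall U, O U -> U x -> U y.

Definition saturated (A : X -> Prop) : Prop :=
  forall x y, A x -> spec_le x y -> A y.

Definition up (x : X) : X -> Prop := fun y => spec_le x y.

Definition compact (A : X -> Prop) : Prop :=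
  forall F : (X -> Prop) -> Prop, (forall U, F U -> O U) ->
    (forall x, A x -> exists U, F U /\ U x) ->
    exists l : list (X -> Prop), (forall U, In U l -> F U) /\
      (forall x, A x -> exists U, In U l /\ U x).

Definition interior (A : X -> Prop) : X -> Prop :=
  fun x => exists U, O U /\ U x /\ subset U A.

Definition inK (A : X -> Prop) : Prop :=
  (exists x, A x) /\ compact A /\ saturated A.

(* K(X) is ordered by reverse inclusion: A ⊑ B iff B ⊆ A.
   A directed subset of K(X) = a family filtered under inclusion. *)
Definition directedK (D : (X -> Prop) -> Prop) : Prop :=
  (forall A, D A -> inK A) /\ (exists A, D A) /\
  (forall A B, D A -> D B -> exists C, D C /\ subset C A /\ subset C B).

Definition is_supK (D : (X -> Prop) -> Prop) (S : X -> Prop) : Prop :=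
  inK S /\ (forall A, D A -> subset S A) /\
  (forall L, inK L -> (forall A, D A -> subset L A) -> subset L S).

Definition way_belowK (A B : X -> Prop) : Prop :=
  forall D S, directedK D -> is_supK D S -> subset S B ->
    exists d, D d /\ subset d A.

Definition continuousK : Prop :=
  (forall D, directedK D -> exists S, is_supK D S) /\
  (forall K, inK K ->
     directedK (fun L => inK L /\ way_belowK L K) /\
     is_supK (fun L => inK L /\ way_belowK L K) K).

Definition scott_openK (W : (X -> Prop) -> Prop) : Prop :=
  (forall A, W A -> inK A) /\
  (forall A B, W A -> inK B -> subset B A -> W B) /\
  (forall D S, directedK D -> is_supK D S -> W S -> exists d, D d /\ W d).

Definition xi_sigma_continuous : Prop :=
  forall W, scott_openK W -> O (fun x => W (up x)).

Definition property_Q : Prop :=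
  forall A B, inK A -> inK B -> (way_belowK A B <-> subset B (interior A)).

Definition well_filtered : Prop :=
  forall (U : X -> Prop) (KK : (X -> Prop) -> Prop),
    O U -> directedK KK ->
    subset (fun x => forall A, KK A -> A x) U ->
    exists A, KK A /\ subset A U.

(* open sets of the Smyth power space P_S(X) (upper Vietoris topology,
   generated by the base  Box U = {K in K(X) | K ⊆ U}, U open) *)
Definition smyth_open (W : (X -> Prop) -> Prop) : Prop :=
  (forall A, W A -> inK A) /\
  (forall K, W K -> exists U, O U /\ subset K U /\
       (forall L, inK L -> subset L U -> W L)).

Definition smyth_first_countable : Prop :=
  forall K, inK K ->
    exists B : nat -> ((X -> Prop) -> Prop),
      (forall n, smyth_open (B n) /\ B n K) /\
      (forall W, smyth_open W -> W K -> exists n, forall L, B n L -> W L).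

Definition locally_compact : Prop :=
  forall x U, O U -> U x ->
    exists V K, O V /\ V x /\ subset V K /\ compact K /\ subset K U.

Definition way_belowO (V U : X -> Prop) : Prop :=
  forall F : (X -> Prop) -> Prop,
    (forall W, F W -> O W) -> (exists W, F W) ->
    (forall W1 W2, F W1 -> F W2 -> exists W3, F W3 /\ subset W1 W3 /\ subset W2 W3) ->
    subset U (fun x => exists W, F W /\ W x) ->
    exists W, F W /\ subset V W.

(* the open-set lattice is continuous: each open U is the join (union)
   of the opens way below it *)
Definition core_compact : Prop :=
  forall U, O U -> forall x, U x <-> exists V, O V /\ way_belowO V U /\ V x.

End Top.

(* Main.v *)
Require Import Defs.
From Stdlib Require Import List Classical ClassicalEpsilon FunctionalExtensionality PropExtensionality Arith Lia.

Definition bigU {X : Type} (F : (X -> Prop) -> Prop) : X -> Prop :=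
  fun x => exists U, F U /\ U x.

Section Basic.
Variable X : Type.
Variable O : (X -> Prop) -> Prop.
Hypothesis HT : is_topology O.

Lemma open_ext U V : O U -> (forall x, U x <-> V x) -> O V.
Proof. destruct HT as (_&_&_&H). eauto. Qed.

Lemma open_union F : (forall U, F U -> O U) -> O (bigU F).
Proof. destruct HT as (_&_&H&_). apply H. Qed.

Lemma open_inter U V : O U -> O V -> O (fun x => U x /\ V x).
Proof. destruct HT as (_&H&_&_). apply H. Qed.

Lemma open_full : O (fun _ => True).
Proof. destruct HT as (H&_&_&_). exact H. Qed.

Lemma open_empty : O (fun _ => False).
Proof.
  apply (open_ext (bigU (fun _ => False))).
  - apply open_union. tauto.
  - intro x; unfold bigU; split; [intros (U&[]&_)|tauto].
Qed.

Lemma open_bin U V : O U -> O V -> O (fun x => U x \/ V x).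
Proof.
  intros HU HV.
  apply (open_ext (bigU (fun W => W = U \/ W = V))).
  - apply open_union. intros W [->| ->]; auto.
  - intro x; unfold bigU; split.
    + intros (W&[->| ->]&H); auto.
    + intros [H|H]; eauto.
Qed.

Lemma open_local S : (forall x, S x -> exists V, O V /\ V x /\ subset V S) -> O S.
Proof.
  intro H. apply (open_ext (bigU (fun V => O V /\ subset V S))).
  - apply open_union. tauto.
  - intro x; unfold bigU; split.
    + intros (V&(_&HV)&Hx). auto.
    + intro Hx. destruct (H x Hx) as (V&?&?&?). eauto.
Qed.

Lemma spec_refl x : spec_le O x x.
Proof. intros U _ H; exact H. Qed.

Lemma spec_trans x y z : spec_le O x y -> spec_le O y z -> spec_le O x z.
Proof. unfold spec_le; intros H1 H2 U HU Hx; exact (H2 U HU (H1 U HU Hx)). Qed.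

Lemma interior_open A : O (interior O A).
Proof.
  apply open_local. intros x (U&HU&Hx&HS). exists U; repeat split; auto.
  intros y Hy. exists U; auto.
Qed.

Lemma interior_sub A : subset (interior O A) A.
Proof. intros x (U&_&Hx&HS). auto. Qed.

Lemma up_inK x : inK O (up O x).
Proof.
  split; [|split].
  - exists x. apply spec_refl.
  - intros F HF Hc. destruct (Hc x (spec_refl x)) as (U&HFU&HUx).
    exists (U :: nil). split.
    + intros V [<-|[]]; auto.
    + intros y Hy. exists U. split; [left; auto|]. apply Hy; auto.
  - intros y z Hy Hz. eapply spec_trans; eauto.
Qed.

Lemma sat_sep B z : saturated O B -> ~ B z -> exists W, O W /\ subset B W /\ ~ W z.
Proof.
  intros HS Hz. exists (bigU (fun U => O U /\ ~ U z)). split; [|split].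
  - apply open_union. tauto.
  - intros b Hb. apply NNPP. intro Hn. apply Hz. apply (HS b z Hb).
    intros U HU HUb. apply NNPP. intro HUz. apply Hn. exists U. auto.
  - intros (U&(_&H)&HU). auto.
Qed.



Lemma sup_contains_inter D S : directedK O D -> is_supK O D S ->
  forall y, (forall A, D A -> A y) -> S y.
Proof.
  intros (HD&_&_) (_&_&Hl) y Hy.
  apply (Hl (up O y) (up_inK y)); [|apply spec_refl].
  intros A HA z Hz. destruct (HD A HA) as (_&_&Hs). exact (Hs y z (Hy A HA) Hz).
Qed.

Lemma directed_list (F : (X -> Prop) -> Prop) :
  (exists W, F W) ->
  (forall W1 W2, F W1 -> F W2 -> exists W3, F W3 /\ subset W1 W3 /\ subset W2 W3) ->
  forall l, (forall U, In U l -> F U) -> exists W, F W /\ forall U, In U l -> subset U W.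
Proof.
  intros Hne Hd l. induction l as [|a l IH]; intro Hl.
  - destruct Hne as (W&HW). exists W. split; auto. intros U [].
  - destruct IH as (W&HW&Hs). { intros U HU; apply Hl; right; auto. }
    destruct (Hd a W) as (W3&H3&Ha&HW3); auto. { apply Hl; left; auto. }
    exists W3. split; auto. intros U [<-|HU]; auto.
    intros x Hx. apply HW3. eapply Hs; eauto.
Qed.

Lemma union_open_list (l : list (X -> Prop)) : (forall U, In U l -> O U) ->
  O (fun x => exists U, In U l /\ U x).
Proof. intro H. apply (open_union (fun U => In U l)). auto. Qed.

Lemma dc_WF : well_filtered O -> forall D, directedK O D ->
  is_supK O D (fun x => forall A, D A -> A x).
Proof.
  intros WF D HD. pose proof HD as (HDK&(A0&HA0)&Hf).
  split; [split; [|split]|split].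
  - apply NNPP; intro Hn.
    destruct (WF (fun _ => False) D open_empty HD) as (A&HA&Hs).
    { intros x Hx. apply Hn. eauto. }
    destruct (HDK A HA) as ((a&Ha)&_). exact (Hs a Ha).
  - intros F HF Hc.
    destruct (WF (bigU F) D (open_union F HF) HD) as (A&HA&Hs).
    { intros x Hx. apply Hc; auto. }
    destruct (HDK A HA) as (_&Hc'&_).
    destruct (Hc' F HF) as (l&Hl&Hcov).
    { intros x Hx. apply Hs; auto. }
    exists l. split; auto. intros x Hx. apply Hcov. apply Hx; auto.
  - intros x y Hx Hxy B HB. destruct (HDK B HB) as (_&_&Hs). exact (Hs x y (Hx B HB) Hxy).
  - intros A HA x Hx. exact (Hx A HA).
  - intros L _ HL x Hx A HA. exact (HL A HA x Hx).
Qed.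

Lemma q_easy : well_filtered O -> forall A B, inK O A -> inK O B ->
  subset B (interior O A) -> way_belowK O A B.
Proof.
  intros WF A B HA HB Hs D S HD HS HSB.
  destruct (WF (interior O A) D (interior_open A) HD) as (d&Hd&Hdi).
  { intros x Hx. apply Hs, HSB. eapply sup_contains_inter; eauto. }
  exists d. split; auto. intros x Hx. apply (interior_sub A). auto.
Qed.

Definition box (W : X -> Prop) : (X -> Prop) -> Prop :=
  fun L => inK O L /\ subset L W.

Lemma box_open W : O W -> smyth_open O (box W).
Proof.
  intro HW. split.
  - intros A (H&_); auto.
  - intros K (_&HK). exists W. split; auto. split; auto.
    intros L HL HLW. split; auto.
Qed.

Lemma q_hard : smyth_first_countable O -> forall A B, inK O A -> inK O B ->
  way_belowK O A B -> subset B (interior O A).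
Proof.
  intros FC A B HA HB wb.
  destruct (FC B HB) as (Bn&HBn&Hbase).
  assert (Hex : forall n, exists V, O V /\ subset B V /\ forall L, inK O L -> subset L V -> Bn n L).
  { intro n. destruct (HBn n) as ((_&Hso)&HBB). destruct (Hso B HBB) as (V&HV&HBV&HL).
    exists V; auto. }
  set (Vf := fun n => epsilon (inhabits (fun _ : X => True))
           (fun V => O V /\ subset B V /\ forall L, inK O L -> subset L V -> Bn n L)).
  assert (HVf : forall n, O (Vf n) /\ subset B (Vf n) /\ forall L, inK O L -> subset L (Vf n) -> Bn n L).
  { intro n. apply (epsilon_spec (inhabits (fun _ : X => True))). apply Hex. }
  set (Un := fix Un n := match n with 0 => Vf 0 | S k => fun y => Un k y /\ Vf (S k) y end).
  assert (HUo : forall n, O (Un n)).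
  { induction n; simpl. apply HVf. apply open_inter; auto. apply HVf. }
  assert (HUB : forall n, subset B (Un n)).
  { induction n; simpl. apply HVf. intros x Hx; split; auto. apply HVf; auto. }
  assert (HUV : forall n, subset (Un n) (Vf n)).
  { destruct n; simpl. intros x Hx; auto. intros x (_&Hx); auto. }
  assert (HUm : forall n m, n <= m -> subset (Un m) (Un n)).
  { intros n m Hnm. induction Hnm. intros x Hx; auto. intros x Hx. apply IHHnm. destruct Hx; auto. }
  assert (Hbasis : forall W, O W -> subset B W -> exists n, subset (Un n) W).
  { intros W HW HBW. destruct (Hbase (box W) (box_open W HW)) as (n&Hn).
    { split; auto. }
    exists n. intros y Hy. assert (Hb : box W (up O y)).
    { apply Hn. apply HVf. apply up_inK. intros z Hz. apply Hz. apply HVf. apply HUV; auto. }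
    destruct Hb as (_&Hb). apply Hb. apply spec_refl. }
  intros y Hy.
  assert (Hfin : exists n, subset (Un n) A).
  { apply NNPP. intro Hn.
    assert (Hz : forall n, exists z, Un n z /\ ~ A z).
    { intro n. apply NNPP. intro Hn2. apply Hn. exists n. intros z Hz. apply NNPP. intro. apply Hn2. eauto. }
    set (yf := fun n => epsilon (inhabits y) (fun z => Un n z /\ ~ A z)).
    assert (Hyf : forall n, Un n (yf n) /\ ~ A (yf n)).
    { intro n. apply (epsilon_spec (inhabits y)). apply Hz. }
    set (Kn := fun n z => B z \/ exists m, n <= m /\ spec_le O (yf m) z).
    destruct HB as (HBne&HBc&HBs).
    assert (HKm : forall n n', n <= n' -> subset (Kn n') (Kn n)).
    { intros n n' Hle z [Hz'|(m&Hm&Hmz)]. left; auto. right. exists m. split; auto. lia. }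
    assert (HKK : forall n, inK O (Kn n)).
    { intro n. split; [|split].
      - destruct HBne as (b&Hb). exists b. left; auto.
      - intros F HF Hc.
        destruct (HBc F HF) as (l&Hl&Hcl). { intros x Hx. apply Hc. left; auto. }
        destruct (Hbasis (fun x => exists U, In U l /\ U x)) as (N&HN).
        { apply union_open_list; auto. }
        { auto. }
        assert (Hl2 : forall N, exists l2, (forall U, In U l2 -> F U) /\
                 forall m, n <= m -> m < N -> exists U, In U l2 /\ U (yf m)).
        { induction N0 as [|N0 IH].
          - exists nil. split. intros U []. intros m _ Hm. lia.
          - destruct IH as (l2&Hl2&Hc2).
            destruct (le_lt_dec n N0) as [Hle|Hlt].
            + destruct (Hc (yf N0)) as (U&HFU&HU).
              { right. exists N0. split; auto. apply spec_refl. }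
              exists (U :: l2). split.
              * intros V [<-|HV]; auto.
              * intros m Hm1 Hm2. destruct (Nat.eq_dec m N0) as [->|Hne].
                { exists U. split; auto. left; auto. }
                destruct (Hc2 m Hm1) as (V&HV&HVm). lia. exists V. split; auto. right; auto.
            + exists l2. split; auto. intros m Hm1 Hm2. apply Hc2; auto. lia. }
        destruct (Hl2 N) as (l2&Hl2F&Hl2c).
        exists (l ++ l2). split.
        { intros U HU. apply in_app_or in HU. destruct HU; auto. }
        intros z [Hz'|(m&Hm&Hmz)].
        + destruct (Hcl z Hz') as (U&HU&HUz). exists U. split; auto. apply in_or_app; auto.
        + destruct (le_lt_dec N m) as [HNm|HmN].
          * destruct (HN (yf m)) as (U&HU&HUy). { apply (HUm N m HNm). apply Hyf. }
            exists U. split. apply in_or_app; auto. apply Hmz; auto.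
          * destruct (Hl2c m Hm HmN) as (U&HU&HUy).
            exists U. split. apply in_or_app; auto. apply Hmz; auto.
      - intros z w [Hz'|(m&Hm&Hmz)] Hzw. left. eapply HBs; eauto.
        right. exists m. split; auto. eapply spec_trans; eauto. }
    set (D := fun K => exists n, K = Kn n).
    assert (HD : directedK O D).
    { split; [|split].
      - intros K (n&->). auto.
      - exists (Kn 0). exists 0. auto.
      - intros K1 K2 (n1&->) (n2&->). exists (Kn (max n1 n2)). split. exists (max n1 n2); auto.
        split; apply HKm; lia. }
    assert (HS : is_supK O D B).
    { split; [split; auto|split].
      - intros K (n&->) x Hx. left; auto.
      - intros L _ HL z Hzz. apply NNPP. intro HnB.
        destruct (sat_sep B z HBs HnB) as (W&HW&HBW&HWz).
        destruct (Hbasis W HW HBW) as (N&HN).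
        destruct (HL (Kn N) (ex_intro _ N eq_refl) z Hzz) as [Hb|(m&Hm&Hmz)]. auto.
        apply HWz. apply Hmz; auto. apply HN. apply (HUm N m Hm). apply Hyf. }
    destruct (wb D B HD HS (fun x H => H)) as (d&(n&->)&Hd).
    apply (proj2 (Hyf n)). apply Hd. right. exists n. split; auto. apply spec_refl. }
  destruct Hfin as (n&Hn). exists (Un n). split; auto. split; auto. apply HUB; auto.
Qed.


Lemma choose_list (Fam : (X -> Prop) -> Prop) (P : (X -> Prop) -> (X -> Prop) -> Prop) :
  (forall V, Fam V -> exists C, P V C) ->
  forall l, (forall V, In V l -> Fam V) ->
  exists lc, (forall C, In C lc -> exists V, In V l /\ P V C) /\
             (forall V, In V l -> exists C, In C lc /\ P V C).
Proof.
  intros HP l. induction l as [|a l IH]; intro Hl.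
  - exists nil. split; intros ? [].
  - destruct IH as (lc&H1&H2). { intros V HV; apply Hl; right; auto. }
    destruct (HP a) as (C&HC). { apply Hl; left; auto. }
    exists (C :: lc). split.
    + intros C' [<-|HC']. exists a. split; auto. left; auto.
      destruct (H1 C' HC') as (V&HV&HPV). exists V. split; auto. right; auto.
    + intros V [<-|HV]. exists C. split; auto. left; auto.
      destruct (H2 V HV) as (C'&HC'&HP'). exists C'. split; auto. right; auto.
Qed.

Lemma compact_union_up (lc : list (X -> Prop)) : (forall C, In C lc -> compact O C) ->
  compact O (fun z => exists C, In C lc /\ exists y, C y /\ spec_le O y z).
Proof.
  intros Hlc F HF Hc.
  assert (H : forall lc', (forall C, In C lc' -> In C lc) -> exists l', (forall U, In U l' -> F U) /\
            forall C, In C lc' -> forall y, C y -> exists U, In U l' /\ U y).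
  { induction lc' as [|a lc' IH]; intro Hs.
    - exists nil. split. intros ? []. intros ? [].
    - destruct IH as (l'&H1&H2). { intros C HC; apply Hs; right; auto. }
      destruct (Hlc a (Hs a (or_introl eq_refl)) F HF) as (la&Hla1&Hla2).
      { intros y Hy. apply Hc. exists a. split. apply Hs; left; auto. exists y. split; auto. apply spec_refl. }
      exists (la ++ l'). split.
      + intros U HU. apply in_app_or in HU. destruct HU; auto.
      + intros C [<-|HC] y Hy.
        * destruct (Hla2 y Hy) as (U&HU&HUy). exists U. split; auto. apply in_or_app; auto.
        * destruct (H2 C HC y Hy) as (U&HU&HUy). exists U. split; auto. apply in_or_app; auto. }
  destruct (H lc (fun C H => H)) as (l'&H1&H2). exists l'. split; auto.
  intros z (C&HC&y&Hy&Hyz). destruct (H2 C HC y Hy) as (U&HU&HUy). exists U. split; auto.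
  apply Hyz; auto.
Qed.

Lemma LCK : locally_compact O -> forall K, inK O K -> forall U, O U -> subset K U ->
  exists L, inK O L /\ subset K (interior O L) /\ subset L U.
Proof.
  intros LC K HK U HU HKU. destruct HK as (HKne&HKc&HKs).
  set (Fam := fun V => O V /\ exists C, compact O C /\ subset V C /\ subset C U).
  destruct (HKc Fam) as (l&Hl&Hcov).
  { intros V (H&_); auto. }
  { intros k Hk. destruct (LC k U HU (HKU k Hk)) as (V&C&HV&HVk&HVC&HC&HCU).
    exists V. split; auto. split; auto. exists C; auto. }
  destruct (choose_list Fam (fun V C => compact O C /\ subset V C /\ subset C U)) with (l := l)
    as (lc&H1&H2).
  { intros V (_&H); auto. }
  { auto. }
  set (L := fun z => exists C, In C lc /\ exists y, C y /\ spec_le O y z).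
  assert (HVL : forall V, In V l -> subset V L).
  { intros V HV x Hx. destruct (H2 V HV) as (C&HC&_&HVC&_). exists C. split; auto.
    exists x. split; auto. apply spec_refl. }
  exists L. split; [split; [|split]|split].
  - destruct HKne as (k&Hk). destruct (Hcov k Hk) as (V&HV&HVk). exists k. apply (HVL V HV); auto.
  - apply compact_union_up. intros C HC. destruct (H1 C HC) as (V&_&HCc&_); auto.
  - intros z w (C&HC&y&Hy&Hyz) Hzw. exists C. split; auto. exists y. split; auto. eapply spec_trans; eauto.
  - intros k Hk. destruct (Hcov k Hk) as (V&HV&HVk). exists V. split. apply (Hl V HV). split; auto.
  - intros z (C&HC&y&Hy&Hyz). destruct (H1 C HC) as (V&_&_&_&HCU). apply Hyz; auto.
Qed.

Lemma LC_C4 : well_filtered O -> smyth_first_countable O -> locally_compact O -> continuousK O.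
Proof.
  intros WF FC LC. split.
  - intros D HD. exists (fun x => forall A, D A -> A x). apply dc_WF; auto.
  - intros K HK. split; [split; [|split]|split; [auto|split]].
    + intros L (HL&_); auto.
    + destruct (LCK LC K HK (fun _ => True) open_full) as (L&HL&HKL&_). { intros x _; auto. }
      exists L. split; auto. apply q_easy; auto.
    + intros L1 L2 (H1&W1) (H2&W2).
      pose proof (q_hard FC L1 K H1 HK W1) as I1. pose proof (q_hard FC L2 K H2 HK W2) as I2.
      destruct (LCK LC K HK (fun x => interior O L1 x /\ interior O L2 x)) as (L3&HL3&HKL3&HL3U).
      { apply open_inter; apply interior_open. }
      { intros x Hx; split; auto. }
      exists L3. split. split; auto. apply q_easy; auto.
      split; intros x Hx; apply interior_sub; apply HL3U; auto.
    + intros L (HL&W). intros x Hx. apply interior_sub. apply (q_hard FC L K HL HK W); auto.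
    + intros M HM HML z Hz. apply NNPP. intro HnK.
      destruct (sat_sep K z (proj2 (proj2 HK)) HnK) as (W&HW&HKW&HWz).
      destruct (LCK LC K HK W HW HKW) as (L&HL&HKL&HLW).
      apply HWz. apply HLW. apply (HML L). split; auto. apply q_easy; auto. auto.
Qed.

Lemma C4_LC : well_filtered O -> smyth_first_countable O -> continuousK O -> locally_compact O.
Proof.
  intros WF FC (_&CK) x U HU HUx.
  destruct (CK (up O x) (up_inK x)) as (HD&HS).
  destruct (WF U _ HU HD) as (L&(HL&W)&HLU).
  { intros y Hy. pose proof (sup_contains_inter _ _ HD HS y Hy) as Hxy. apply Hxy; auto. }
  pose proof (q_hard FC L (up O x) HL (up_inK x) W x (spec_refl x)) as (V&HV&HVx&HVL).
  exists V, L. repeat split; auto. apply HL.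
Qed.

Lemma C4_XI : smyth_first_countable O -> continuousK O -> xi_sigma_continuous O.
Proof.
  intros FC (_&CK) W (HWK&HWup&HWs). apply open_local. intros x Hx.
  destruct (CK (up O x) (up_inK x)) as (HD&HS).
  destruct (HWs _ _ HD HS Hx) as (d&(Hd&Wd)&HWd).
  destruct (q_hard FC d (up O x) Hd (up_inK x) Wd x (spec_refl x)) as (V&HV&HVx&HVd).
  exists V. split; auto. split; auto. intros y Hy. apply (HWup d); auto. apply up_inK.
  intros z Hz. destruct Hd as (_&_&Hs). apply (Hs y z); auto.
Qed.

Lemma LC_CC : locally_compact O -> core_compact O.
Proof.
  intros LC U HU x. split.
  - intro Hx. destruct (LC x U HU Hx) as (V&K&HV&HVx&HVK&HK&HKU).
    exists V. split; auto. split; auto.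
    intros F HF Hne Hd Hcov.
    destruct (HK F HF) as (l&Hl&Hcl). { intros y Hy. apply Hcov. auto. }
    destruct (directed_list F Hne Hd l Hl) as (W&HW&HlW).
    exists W. split; auto. intros y Hy. destruct (Hcl y (HVK y Hy)) as (U'&HU'&HU'y).
    apply (HlW U'); auto.
  - intros (V&HV&Hwb&HVx). destruct (Hwb (fun W => W = U)) as (W&->&HVW); auto.
    + intros W ->; auto.
    + exists U; auto.
    + intros W1 W2 -> ->. exists U. split; auto. split; intros y Hy; auto.
    + intros y Hy. exists U. auto.
Qed.

Inductive tower (f : (X -> Prop) -> (X -> Prop)) (G0 : X -> Prop) : (X -> Prop) -> Prop :=
| tw_base : tower f G0 G0
| tw_succ : forall P, tower f G0 P -> tower f G0 (f P)
| tw_sup : forall C, (forall A, C A -> tower f G0 A) ->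
    (forall A B, C A -> C B -> subset A B \/ subset B A) -> (exists A, C A) -> tower f G0 (bigU C).

Lemma seteq (A B : X -> Prop) : subset A B -> subset B A -> A = B.
Proof.
  intros H1 H2. apply functional_extensionality. intro x. apply propositional_extensionality.
  split; auto.
Qed.

Section Tower.
Variable f : (X -> Prop) -> (X -> Prop).
Variable G0 : X -> Prop.
Hypothesis Hf : forall P, tower f G0 P -> subset P (f P) /\ ~ subset (f P) P.

Lemma tw_G0 P : tower f G0 P -> subset G0 P.
Proof.
  induction 1 as [|P HP IH|C HC IH Hch (A&HA)].
  - intros x H; auto.
  - intros x H. apply Hf; auto.
  - intros x H. exists A. split; auto. apply IH; auto.
Qed.

Definition extreme c := forall x, tower f G0 x -> subset x c -> ~ subset c x -> subset (f x) c.

Lemma tw_lem2 c : tower f G0 c -> extreme c -> forall x, tower f G0 x -> subset x c \/ subset (f c) x.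
Proof.
  intros Hc Hext x Hx. induction Hx as [|x Hx IH|C HC IH Hch Hne].
  - left. apply tw_G0; auto.
  - destruct IH as [IH|IH].
    + destruct (classic (subset c x)) as [Hcx|Hcx].
      * right. rewrite (seteq x c IH Hcx). intros y Hy; auto.
      * left. apply Hext; auto.
    + right. intros y Hy. apply (proj1 (Hf x Hx)). auto.
  - destruct (classic (exists A, C A /\ subset (f c) A)) as [(A&HA&HfA)|Hn].
    + right. intros y Hy. exists A. auto.
    + left. intros y (A&HA&HAy). destruct (IH A HA) as [H|H]. auto.
      exfalso. apply Hn. eauto.
Qed.

Lemma tw_lem3 c : tower f G0 c -> extreme c.
Proof.
  intro Hc. induction Hc as [|c Hc IH|C HC IH Hch Hne].
  - intros x Hx Hs Hn. exfalso. apply Hn. apply tw_G0; auto.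
  - intros x Hx Hs Hn. destruct (tw_lem2 c Hc IH x Hx) as [H|H]; [|exfalso; auto].
    destruct (classic (subset c x)) as [Hcx|Hcx].
    + rewrite (seteq x c H Hcx). intros y Hy; auto.
    + intros y Hy. apply (proj1 (Hf c Hc)). apply (IH x Hx H Hcx); auto.
  - intros x Hx Hs Hn.
    destruct (classic (exists A, C A /\ ~ subset (f A) x)) as [(A&HA&HAn)|Hno].
    + destruct (tw_lem2 A (HC A HA) (IH A HA) x Hx) as [HxA|HfA]; [|exfalso; auto].
      destruct (classic (subset A x)) as [HAx|HAx].
      * assert (HB : exists B, C B /\ ~ subset B x).
        { apply NNPP. intro Hb. apply Hn. intros y (B&HB&HBy). apply NNPP. intro Hy.
          apply Hb. exists B. split; auto. }
        destruct HB as (B&HB&HBx).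
        destruct (Hch A B HA HB) as [HAB|HBA].
        -- rewrite (seteq x A HxA HAx). intros y Hy. exists B. split; auto.
           apply (IH B HB A (HC A HA) HAB); auto.
           intro HBA. apply HBx. intros z Hz. apply HAx. auto.
        -- exfalso. apply HBx. intros z Hz. apply HAx. auto.
      * intros y Hy. exists A. split; auto. apply (IH A HA x Hx HxA HAx); auto.
    + exfalso. apply Hn. intros y (A&HA&HAy). apply NNPP. intro Hy.
      apply Hno. exists A. split; auto. intro HfA. apply Hy. apply HfA. apply (proj1 (Hf A (HC A HA))). auto.
Qed.

Lemma tw_chain x y : tower f G0 x -> tower f G0 y -> subset x y \/ subset y x.
Proof.
  intros Hx Hy. destruct (tw_lem2 y Hy (tw_lem3 y Hy) x Hx) as [H|H]; auto.
  right. intros z Hz. apply H. apply (proj1 (Hf y Hy)). auto.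
Qed.

Lemma tw_false : False.
Proof.
  assert (Ht : tower f G0 (bigU (tower f G0))).
  { apply tw_sup; auto. apply tw_chain. exists G0. constructor. }
  destruct (Hf _ Ht) as (_&Hn). apply Hn. intros y Hy. exists (f (bigU (tower f G0))).
  split; auto. constructor; auto.
Qed.

End Tower.

Lemma zorn (Fam : (X -> Prop) -> Prop) (G0 : X -> Prop) : Fam G0 ->
  (forall C, (forall A, C A -> Fam A) -> (forall A B, C A -> C B -> subset A B \/ subset B A) ->
     (exists A, C A) -> Fam (bigU C)) ->
  exists P, Fam P /\ forall Q, Fam Q -> subset P Q -> subset Q P.
Proof.
  intros HG Hch. apply NNPP. intro Hno.
  assert (Hnx : forall P, Fam P -> exists Q, Fam Q /\ subset P Q /\ ~ subset Q P).
  { intros P HP. apply NNPP. intro Hn. apply Hno. exists P. split; auto.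
    intros Q HQ HPQ. apply NNPP. intro HQP. apply Hn. eauto. }
  set (f := fun P => epsilon (inhabits G0) (fun Q => Fam Q /\ subset P Q /\ ~ subset Q P)).
  assert (HfF : forall P, Fam P -> Fam (f P) /\ subset P (f P) /\ ~ subset (f P) P).
  { intros P HP. apply (epsilon_spec (inhabits G0)). auto. }
  assert (HTw : forall P, tower f G0 P -> Fam P).
  { induction 1; auto. apply HfF; auto. }
  apply (tw_false f G0). intros P HP. split; apply HfF; auto.
Qed.

Lemma wb_sub V U : O U -> way_belowO O V U -> subset V U.
Proof.
  intros HU H. destruct (H (fun W => W = U)) as (W&->&HW); auto.
  - intros W ->; auto.
  - exists U; auto.
  - intros W1 W2 -> ->. exists U. split; auto. split; intros y Hy; auto.
  - intros y Hy. exists U. auto.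
Qed.

Lemma wb_mono V V' U' U : subset V V' -> way_belowO O V' U' -> subset U' U -> way_belowO O V U.
Proof.
  intros H1 H2 H3 F HF Hne Hd Hc. destruct (H2 F HF Hne Hd) as (W&HW&HVW).
  { intros y Hy. apply Hc. auto. }
  exists W. split; auto. intros y Hy. auto.
Qed.

Lemma wb_union V1 V2 U : way_belowO O V1 U -> way_belowO O V2 U ->
  way_belowO O (fun x => V1 x \/ V2 x) U.
Proof.
  intros H1 H2 F HF Hne Hd Hc.
  destruct (H1 F HF Hne Hd Hc) as (W1&HW1&HV1).
  destruct (H2 F HF Hne Hd Hc) as (W2&HW2&HV2).
  destruct (Hd W1 W2 HW1 HW2) as (W3&HW3&H13&H23).
  exists W3. split; auto. intros y [Hy|Hy]; auto.
Qed.

Lemma wb_empty U : way_belowO O (fun _ => False) U.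
Proof. intros F HF (W&HW) Hd Hc. exists W. split; auto. intros y []. Qed.

Lemma wb_cover V U (H : (X -> Prop) -> Prop) : way_belowO O V U -> (forall h, H h -> O h) ->
  subset U (bigU H) ->
  exists l, (forall h, In h l -> H h) /\ subset V (fun x => exists h, In h l /\ h x).
Proof.
  intros Hwb HH Hc.
  destruct (Hwb (fun W => exists l, (forall h, In h l -> H h) /\ W = (fun x => exists h, In h l /\ h x)))
    as (W&(l&Hl&->)&HVW).
  - intros W (l&Hl&->). apply union_open_list. intros h Hh; auto.
  - exists (fun x => exists h, In h nil /\ h x). exists nil. split; auto. intros h [].
  - intros W1 W2 (l1&Hl1&->) (l2&Hl2&->). exists (fun x => exists h, In h (l1 ++ l2) /\ h x).
    split. exists (l1 ++ l2). split; auto. intros h Hh. apply in_app_or in Hh. destruct Hh; auto.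
    split; intros y (h&Hh&Hy); exists h; split; auto; apply in_or_app; auto.
  - intros y Hy. destruct (Hc y Hy) as (h&Hh&Hhy). exists (fun x => exists h', In h' (h :: nil) /\ h' x).
    split. exists (h :: nil). split; auto. intros h' [<-|[]]; auto. exists h. split; auto. left; auto.
  - exists l. split; auto.
Qed.

Lemma wb_interp : core_compact O -> forall V U, O U -> way_belowO O V U ->
  exists W, O W /\ way_belowO O V W /\ way_belowO O W U.
Proof.
  intros CC V U HU Hwb.
  destruct (Hwb (fun W'' => O W'' /\ exists W', O W' /\ way_belowO O W'' W' /\ way_belowO O W' U))
    as (W''&(HW''&W'&HW'&H1&H2)&HVW).
  - intros W (H&_); auto.
  - exists (fun _ => False). split. apply open_empty. exists (fun _ => False).
    split. apply open_empty. split; apply wb_empty.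
  - intros A1 A2 (HA1&W1&HW1&H11&H12) (HA2&W2&HW2&H21&H22).
    exists (fun x => A1 x \/ A2 x). split; [split|split].
    + apply open_bin; auto.
    + exists (fun x => W1 x \/ W2 x). split. apply open_bin; auto. split.
      * apply wb_union.
        -- apply (wb_mono A1 A1 W1); auto. intros y Hy; auto. intros y Hy; auto.
        -- apply (wb_mono A2 A2 W2); auto. intros y Hy; auto. intros y Hy; auto.
      * apply wb_union; auto.
    + intros y Hy; auto.
    + intros y Hy; auto.
  - intros y Hy. destruct (proj1 (CC U HU y) Hy) as (W'&HW'&Hw'&Hy').
    destruct (proj1 (CC W' HW' y) Hy') as (W''&HW''&Hw''&Hy'').
    exists W''. split; auto. split; auto. exists W'. auto.
  - exists W'. split; auto. split; auto. apply (wb_mono V W'' W' W'); auto. intros y Hy; auto.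
Qed.

Lemma CC_LC : well_filtered O -> core_compact O -> locally_compact O.
Proof.
  intros WF CC x U HU Hx.
  destruct (proj1 (CC U HU x) Hx) as (V&HV&HVU&HVx).
  set (g := fun W => epsilon (inhabits U) (fun W' => O W' /\ way_belowO O V W' /\ way_belowO O W' W)).
  set (Z := fun n => Nat.iter n g U).
  assert (HZ : forall n, O (Z n) /\ way_belowO O V (Z n) /\ way_belowO O (Z (S n)) (Z n)).
  { induction n as [|n IH].
    - assert (H : O (g U) /\ way_belowO O V (g U) /\ way_belowO O (g U) U).
      { apply (epsilon_spec (inhabits U)). apply wb_interp; auto. }
      split; auto. split; auto. apply H.
    - destruct IH as (H1&H2&H3).
      assert (H : O (g (Z n)) /\ way_belowO O V (g (Z n)) /\ way_belowO O (g (Z n)) (Z n)).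
      { apply (epsilon_spec (inhabits U)). apply wb_interp; auto. }
      change (Z (S n)) with (g (Z n)). destruct H as (Ha&Hb&Hc).
      split; auto. split; auto.
      assert (H' : O (g (g (Z n))) /\ way_belowO O V (g (g (Z n))) /\ way_belowO O (g (g (Z n))) (g (Z n))).
      { apply (epsilon_spec (inhabits U)). apply wb_interp; auto. }
      apply H'. }
  assert (HZd : forall n m, n <= m -> subset (Z m) (Z n)).
  { intros n m Hnm. induction Hnm. intros y Hy; auto.
    intros y Hy. apply IHHnm. apply (wb_sub (Z (S m)) (Z m)); [apply HZ|apply HZ|auto]. }
  set (K := fun y => forall n, Z n y).
  exists V, K. split; auto. split; auto. split; [|split].
  - intros y Hy n. apply (wb_sub V (Z n)); apply HZ || auto.
  - intros H HH Hc.
    assert (HG : O (bigU H)) by (apply open_union; auto).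
    assert (Hn : exists n, subset (Z n) (bigU H)).
    { apply NNPP. intro Hno.
      set (Fam := fun P => O P /\ subset (bigU H) P /\ forall n, ~ subset (Z n) P).
      destruct (zorn Fam (bigU H)) as (P&(HP&HGP&HPZ)&Hmax).
      - split; auto. split. intros y Hy; auto. intros n Hs. apply Hno. eauto.
      - intros C HCF Hch (A0&HA0). split; [|split].
        + apply open_union. intros A HA. apply HCF; auto.
        + intros y Hy. exists A0. split; auto. apply (HCF A0 HA0); auto.
        + intros n Hs. destruct (proj2 (proj2 (HZ n)) C) as (W&HW&HZW).
          * intros A HA. apply HCF; auto.
          * exists A0; auto.
          * intros W1 W2 H1 H2. destruct (Hch W1 W2 H1 H2) as [H12|H21].
            -- exists W2. split; auto. split; auto. intros y Hy; auto.
            -- exists W1. split; auto. split; auto. intros y Hy; auto.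
          * auto.
          * apply (proj2 (proj2 (HCF W HW)) (S n)). auto.
      - assert (Hkey : forall Oo, O Oo -> forall y, Oo y -> ~ P y ->
                  exists j, subset (Z j) (fun z => Oo z \/ P z)).
        { intros Oo HOo y Hy HPy. apply NNPP. intro Hnj.
          assert (HF : Fam (fun z => Oo z \/ P z)).
          { split. apply open_bin; auto. split. intros z Hz; right; auto.
            intros n Hs. apply Hnj. eauto. }
          apply HPy. apply (Hmax _ HF). intros z Hz; right; auto. left; auto. }
        assert (Hm : forall k, exists y, Z k y /\ ~ P y).
        { intro k. apply NNPP. intro Hk. apply (HPZ k). intros y Hy. apply NNPP. intro. apply Hk. eauto. }
        set (m := fun k => epsilon (inhabits x) (fun y => Z k y /\ ~ P y)).
        assert (Hmk : forall k, Z k (m k) /\ ~ P (m k)).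
        { intro k. apply (epsilon_spec (inhabits x)). apply Hm. }
        set (Qn := fun n z => exists k, n <= k /\ spec_le O (m k) z).
        assert (HQm : forall n n', n <= n' -> subset (Qn n') (Qn n)).
        { intros n n' Hle z (k&Hk&Hkz). exists k. split; auto. lia. }
        assert (HQZ : forall n, subset (Qn n) (Z n)).
        { intros n z (k&Hk&Hkz). apply Hkz. apply HZ. apply (HZd n k Hk). apply Hmk. }
        assert (HQK : forall n, inK O (Qn n)).
        { intro n. split; [|split].
          - exists (m n). exists n. split; auto. apply spec_refl.
          - intros F HF Hc'.
            destruct (Hc' (m n)) as (h&HFh&Hh). { exists n. split; auto. apply spec_refl. }
            destruct (Hkey h (HF h HFh) (m n) Hh (proj2 (Hmk n))) as (j&Hj).
            assert (Hl2 : forall N, exists l2, (forall U, In U l2 -> F U) /\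
                 forall k, n <= k -> k < N -> exists U, In U l2 /\ U (m k)).
            { induction N as [|N IH].
              - exists nil. split. intros ? []. intros k _ Hk. lia.
              - destruct IH as (l2&Hl2&Hc2).
                destruct (le_lt_dec n N) as [Hle|Hlt].
                + destruct (Hc' (m N)) as (U'&HFU&HUU).
                  { exists N. split; auto. apply spec_refl. }
                  exists (U' :: l2). split.
                  * intros W [<-|HW]; auto.
                  * intros k Hk1 Hk2. destruct (Nat.eq_dec k N) as [->|Hne].
                    { exists U'. split; auto. left; auto. }
                    destruct (Hc2 k Hk1) as (W&HW&HWk). lia. exists W. split; auto. right; auto.
                + exists l2. split; auto. intros k Hk1 Hk2. apply Hc2; auto. lia. }
            destruct (Hl2 j) as (l2&Hl2F&Hl2c).
            exists (h :: l2). split.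
            { intros W [<-|HW]; auto. }
            intros z (k&Hk&Hkz).
            destruct (le_lt_dec j k) as [Hjk|Hkj].
            + exists h. split. left; auto. apply Hkz. apply HF; auto.
              destruct (Hj (m k)) as [H1|H1]; auto.
              * apply (HZd j k Hjk). apply Hmk.
              * exfalso. apply (proj2 (Hmk k)). auto.
            + destruct (Hl2c k Hk Hkj) as (W&HW&HWk). exists W. split. right; auto.
              apply Hkz; auto.
          - intros z w (k&Hk&Hkz) Hzw. exists k. split; auto. eapply spec_trans; eauto. }
        set (D := fun A => exists n, A = Qn n).
        assert (HD : directedK O D).
        { split; [|split].
          - intros A (n&->). auto.
          - exists (Qn 0). exists 0. auto.
          - intros A1 A2 (n1&->) (n2&->). exists (Qn (max n1 n2)). split. exists (max n1 n2); auto.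
            split; apply HQm; lia. }
        assert (Hp : exists p, (forall A, D A -> A p) /\ ~ P p).
        { apply NNPP. intro Hnp.
          destruct (WF P D HP HD) as (d&(n&->)&Hd).
          { intros z Hz. apply NNPP. intro HPz. apply Hnp. eauto. }
          apply (proj2 (Hmk n)). apply Hd. exists n. split; auto. apply spec_refl. }
        destruct Hp as (p&Hp1&Hp2). apply Hp2. apply HGP.
        apply Hc. intro n. apply (HQZ n). apply Hp1. exists n; auto. }
    destruct Hn as (n&Hn).
    destruct (wb_cover (Z (S n)) (Z n) H (proj2 (proj2 (HZ n))) HH Hn) as (l&Hl&Hcov).
    exists l. split; [auto|]. intros y Hy. apply Hcov. apply Hy.
  - intros y Hy. apply (Hy 0).
Qed.

End Basic.

Theorem mainTheorem10 (X : Type) (O : (X -> Prop) -> Prop) :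
  is_topology O -> T0 O -> well_filtered O -> smyth_first_countable O ->
  (locally_compact O <-> (continuousK O /\ xi_sigma_continuous O)) /\
  ((continuousK O /\ xi_sigma_continuous O) <-> (continuousK O /\ property_Q O)) /\
  ((continuousK O /\ property_Q O) <-> continuousK O) /\
  (continuousK O <-> core_compact O).
Proof.
  intros HT _ WF FC.
  assert (HQ : property_Q O).
  { intros A B HA HB. split. apply (q_hard X O HT FC A B HA HB). apply (q_easy X O HT WF A B HA HB). }
  split; [|split; [|split]].
  - split.
    + intro LC. pose proof (LC_C4 X O HT WF FC LC) as C4. split; auto. apply (C4_XI X O HT FC C4).
    + intros (C4&_). apply (C4_LC X O HT WF FC C4).
  - split.
    + intros (C4&_). auto.
    + intros (C4&_). split; auto. apply (C4_XI X O HT FC C4).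
  - split. intros (C4&_); auto. intro C4; auto.
  - split.
    + intro C4. apply (LC_CC X O). apply (C4_LC X O HT WF FC C4).
    + intro CC. apply (LC_C4 X O HT WF FC). apply (CC_LC X O HT WF CC).
Qed.
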